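(* Assume the setting in the context, with $X_A,X_B$ independent conditional on $Y$. Consider the optimization problem of maximizing $MIG^f(h_A,h_B,\mathbf{p})$ over all $h_A:\Sigma_A\to\Delta_\Sigma$, $h_B:\Sigma_B\to\Delta_\Sigma$ and $\mathbf{p}\in\Delta_\Sigma$ with all entries positive. Then: (1) (Solution $\to$ maximizer) For every random variable $Z$ with values in $\Sigma$, jointly distributed with $(X_A,X_B)$ (with $(X_A,X_B)$ having its given distribution), such that $\Pr[Z=y]>0$ for all $y$ and $X_A,X_B$ are independent conditional on $Z$, the triple $h_A^*(x_A):=(\Pr[Z=y\mid X_A=x_A])_{y\in\Sigma}$, $h_B^*(x_B):=(\Pr[Z=y\mid X_B=x_B])_{y\in\Sigma}$, $\mathbf{p}^*:=(\Pr[Z=y])_{y\in\Sigma}$ is a maximizer, and the maximum value equals $MI^f(X_A;X_B)$. (In particular this holds for $Z=Y$.) (2) (Maximizer $\to$ permuted ground truth) If moreover the prior is well-defined, $f$ is differentiable and $f'$ is injective, then for every maximizer $(h_A^*,h_B^*,\mathbf{p}^* )$ there is a permutation $\pi$ of $\Sigma$ such that $h_A^*(x_A)=(\Pr[\pi(Y)=y\mid X_A=x_A])_y$ for all $x_A$, $h_B^*(x_B)=(\Pr[\pi(Y)=y\mid X_B=x_B])_y$ for all $x_B$, and $\mathbf{p}^*=(\Pr[\pi(Y)=y])_y$.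
   Context: Let $\Sigma_A,\Sigma_B,\Sigma$ be finite nonempty sets and $(X_A,X_B,Y)$ random variables with values in $\Sigma_A\times\Sigma_B\times\Sigma$ (joint law called the prior), with $\Pr[X_A=x_A]>0$, $\Pr[X_B=x_B]>0$, $\Pr[Y=y]>0$ for all values. $\Delta_\Sigma$ is the set of probability vectors on $\Sigma$. $K(x_A,x_B):=\frac{\Pr[X_A=x_A,X_B=x_B]}{\Pr[X_A=x_A]\Pr[X_B=x_B]}$. Let $f:[0,\infty)\to\mathbb{R}$ be convex with $f(1)=0$, $f^\star(u):=\sup_{t\ge0}(tu-f(t))$, $\partial f$ its subdifferential, and $MI^f(X_A;X_B):=\sum_{x_A,x_B}\Pr[X_A=x_A]\Pr[X_B=x_B]f(K(x_A,x_B))$. Fix a selection $g$ with $g(t)\in\partial f(t)$ for all $t$ (take $g=f'$ if $f$ is differentiable), and define the reward $R^f(\mathbf{p}_1,\mathbf{p}_2,\mathbf{p}):=g\big(\sum_{y}\mathbf{p}_1(y)\mathbf{p}_2(y)/\mathbf{p}(y)\big)$. The objective is $$MIG^f(h_A,h_B,\mathbf{p}):=\sum_{x_A,x_B}\Pr[X_A=x_A,X_B=x_B]\,R^f(h_A(x_A),h_B(x_B),\mathbf{p})-\sum_{x_A,x_B}\Pr[X_A=x_A]\Pr[X_B=x_B]\,f^\star\big(R^f(h_A(x_A),h_B(x_B),\mathbf{p})\big),$$ which is the expectation of the empirical $f$-mutual information gain (same-task average of $R^f$ minus distinct-task-pair average of $f^\star(R^f)$) over i.i.d. task samples. For a permutation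 $\pi$ of $\Sigma$, $\pi(Y)$ is the relabeled variable. Well-defined prior: consider the system, in unknowns $\mathbf{a}^{x_A}\in\Delta_\Sigma$ ($x_A\in\Sigma_A$), $\mathbf{b}^{x_B}\in\Delta_\Sigma$ ($x_B\in\Sigma_B$), $\mathbf{r}\in\Delta_\Sigma$ with positive entries: $\sum_{y}a^{x_A}_y b^{x_B}_y/r_y=K(x_A,x_B)$ for all $(x_A,x_B)$. The prior is well-defined if for any two solutions $(\{\mathbf{a}^{x_A}\},\{\mathbf{b}^{x_B}\},\mathbf{r})$ and $(\{\mathbf{c}^{x_A}\},\{\mathbf{d}^{x_B}\},\mathbf{r}')$ there is a permutation $\pi$ of $\Sigma$ with $\mathbf{r}=\pi\mathbf{r}'$, $\mathbf{a}^{x_A}=\pi\mathbf{c}^{x_A}$ and $\mathbf{b}^{x_B}=\pi\mathbf{d}^{x_B}$ for all $x_A,x_B$, where $\pi$ acts on vectors by permuting coordinates. *)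

(* Defs.v *)
From Stdlib Require Import Reals ClassicalEpsilon.
From mathcomp Require Import all_boot fingroup perm.

Set Implicit Arguments.
Unset Strict Implicit.
Unset Printing Implicit Defensive.

Local Open Scope R_scope.

Definition rsum {T : finType} (F : T -> R) : R := \big[Rplus/0]_(x : T) F x.

Section Defs.
Variables (A B S : finType).

(* a joint pmf of (X_A, X_B, Y) is P : A -> B -> S -> R *)
Definition is_pmf3 (P : A -> B -> S -> R) : Prop :=
  (forall a b y, 0 <= P a b y) /\
  rsum (fun a => rsum (fun b => rsum (fun y => P a b y))) = 1.

Definition PA (P : A -> B -> S -> R) (a : A) : R :=
  rsum (fun b => rsum (fun y => P a b y)).
Definition PB (P : A -> B -> S -> R) (b : B) : R :=
  rsum (fun a => rsum (fun y => P a b y)).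
Definition PY (P : A -> B -> S -> R) (y : S) : R :=
  rsum (fun a => rsum (fun b => P a b y)).
Definition PAB (P : A -> B -> S -> R) (a : A) (b : B) : R :=
  rsum (fun y => P a b y).
Definition PAY (P : A -> B -> S -> R) (a : A) (y : S) : R :=
  rsum (fun b => P a b y).
Definition PBY (P : A -> B -> S -> R) (b : B) (y : S) : R :=
  rsum (fun a => P a b y).

Definition cond_indep (P : A -> B -> S -> R) : Prop :=
  forall a b y, P a b y * PY P y = PAY P a y * PBY P b y.

Definition Kratio (P : A -> B -> S -> R) (a : A) (b : B) : R :=
  PAB P a b / (PA P a * PB P b).

Definition is_dist (v : S -> R) : Prop :=
  (forall y, 0 <= v y) /\ rsum v = 1.

Definition Rf (g : R -> R) (p1 p2 p : S -> R) : R :=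
  g (rsum (fun y => p1 y * p2 y / p y)).

Definition MIf (f : R -> R) (P : A -> B -> S -> R) : R :=
  rsum (fun a => rsum (fun b => PA P a * PB P b * f (Kratio P a b))).

Definition admissible (hA : A -> S -> R) (hB : B -> S -> R) (p : S -> R) : Prop :=
  (forall a, is_dist (hA a)) /\ (forall b, is_dist (hB b)) /\
  is_dist p /\ (forall y, 0 < p y).

Definition solves (P : A -> B -> S -> R)
    (av : A -> S -> R) (bv : B -> S -> R) (r : S -> R) : Prop :=
  (forall a, is_dist (av a)) /\ (forall b, is_dist (bv b)) /\
  is_dist r /\ (forall y, 0 < r y) /\
  (forall a b, rsum (fun y => av a y * bv b y / r y) = Kratio P a b).

Definition permv (pi : {perm S}) (v : S -> R) : S -> R :=
  fun y => v ((pi^-1)%g y).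

Definition well_defined_prior (P : A -> B -> S -> R) : Prop :=
  forall av bv r cv dv r',
    solves P av bv r -> solves P cv dv r' ->
    exists pi : {perm S},
      r = permv pi r' /\ (forall a, av a = permv pi (cv a)) /\
      (forall b, bv b = permv pi (dv b)).
End Defs.

(* Wherever it is used below
   (at u = g(t) with g(t) a subgradient) the supremum is finite and attained. *)
Definition fstar (f : R -> R) (u : R) : R :=
  epsilon (inhabits 0)
    (fun v => is_lub (fun w => exists t, 0 <= t /\ w = t * u - f t) v).

Definition convex_nonneg (f : R -> R) : Prop :=
  forall x y l, 0 <= x -> 0 <= y -> 0 <= l <= 1 ->
    f (l * x + (1 - l) * y) <= l * f x + (1 - l) * f y.

Definition subgrad (f : R -> R) (t u : R) : Prop :=
  forall s, 0 <= s -> f t + u * (s - t) <= f s.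

Definition MIG {A B S : finType} (f g : R -> R) (P : A -> B -> S -> R)
    (hA : A -> S -> R) (hB : B -> S -> R) (p : S -> R) : R :=
  rsum (fun a => rsum (fun b =>
     PAB P a b * Rf g (hA a) (hB b) p
     - PA P a * PB P b * fstar f (Rf g (hA a) (hB b) p))).

Definition is_maximizer {A B S : finType} (f g : R -> R) (P : A -> B -> S -> R)
    (hA : A -> S -> R) (hB : B -> S -> R) (p : S -> R) : Prop :=
  admissible hA hB p /\
  forall hA' hB' p', admissible hA' hB' p' -> MIG f g P hA' hB' p' <= MIG f g P hA hB p.

Definition deriv_nonneg (f g : R -> R) : Prop :=
  (forall t, 0 < t -> derivable_pt_lim f t (g t)) /\
  (forall eps, 0 < eps -> exists delta, 0 < delta /\
     forall h, 0 < h < delta -> Rabs ((f h - f 0) / h - g 0) < eps).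

(* Main.v *)
Require Import Defs.
From HB Require Import structures.
From Stdlib Require Import Reals Lra Psatz ClassicalEpsilon.
From mathcomp Require Import all_boot fingroup perm.
Local Open Scope R_scope.
HB.instance Definition _ := Monoid.isComLaw.Build R 0 Rplus (fun x y z => esym (Rplus_assoc x y z)) Rplus_comm Rplus_0_l.

Lemma rsum_ext (T : finType) (F G : T -> R) : (forall x, F x = G x) -> rsum F = rsum G.
Proof. move=> H; rewrite /rsum; apply: eq_bigr => i _; exact: H. Qed.

Lemma rsum_exch (A B: finType) (F : A -> B -> R) :
  rsum (fun a => rsum (fun b => F a b)) = rsum (fun b => rsum (fun a => F a b)).
Proof. rewrite /rsum. exact: exchange_big. Qed.

Lemma rsum_plus (T : finType) (F G : T -> R) : rsum (fun x => F x + G x) = rsum F + rsum G.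
Proof. rewrite /rsum. exact: big_split. Qed.

Lemma rsum_mull (T : finType) c (F : T -> R) : rsum (fun x => c * F x) = c * rsum F.
Proof.
rewrite /rsum. apply: (big_rec2 (fun y1 y2 => y1 = c * y2)); first by ring.
move=> i y1 y2 _ ->. ring.
Qed.

Lemma rsum_div (T : finType) c (F : T -> R) : rsum (fun x => F x / c) = rsum F / c.
Proof. rewrite /Rdiv Rmult_comm -rsum_mull. apply: rsum_ext => x; ring. Qed.

Lemma rsum_minus (T : finType) (F G : T -> R) : rsum (fun x => F x - G x) = rsum F - rsum G.
Proof.
have -> : rsum (fun x => F x - G x) = rsum (fun x => F x + (-1) * G x) by apply: rsum_ext => x; ring.
rewrite rsum_plus rsum_mull; ring.
Qed.

Lemma rsum_le (T : finType) (F G : T -> R) : (forall x, F x <= G x) -> rsum F <= rsum G.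
Proof.
move=> H; rewrite /rsum. apply: (big_rec2 (fun y1 y2 => y1 <= y2)); first lra.
move=> i y1 y2 _ h. have := H i. lra.
Qed.

Lemma rsum_ge0 (T : finType) (F : T -> R) : (forall x, 0 <= F x) -> 0 <= rsum F.
Proof.
move=> H. have -> : 0 = rsum (fun _ : T => 0).
  rewrite /rsum. by rewrite big1.
exact: rsum_le.
Qed.

Lemma rsum_eq0 (T : finType) (F : T -> R) : (forall x, 0 <= F x) -> rsum F = 0 -> forall x, F x = 0.
Proof.
move=> H H0 x. move: H0; rewrite /rsum (bigD1 x) //=.
have : 0 <= \big[Rplus/0]_(i | i != x) F i.
  apply: (big_ind (fun y => 0 <= y)) => //; [lra | move=> u v; lra].
have := H x. lra.
Qed.

Lemma fstar_val f g t : 0 <= t -> subgrad f t (g t) -> fstar f (g t) = t * g t - f t.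
Proof.
move=> ht Hs.
have Hl : is_lub (fun w => exists s, 0 <= s /\ w = s * g t - f s) (t * g t - f t).
  split.
  - move=> w [s [hs ->]]. have := Hs s hs. lra.
  - move=> b Hb. apply: Hb. by exists t.
rewrite /fstar.
have He := epsilon_spec (inhabits 0) _ (ex_intro _ _ Hl).
exact: (is_lub_u _ _ _ He Hl).
Qed.

Lemma key_ineq f g t K : 0 <= t -> 0 <= K -> subgrad f t (g t) ->
  K * g t - fstar f (g t) <= f K.
Proof. move=> ht hK Hs. rewrite fstar_val //. have := Hs K hK. lra. Qed.

Lemma key_eq f g t K : 0 <= t -> 0 <= K -> convex_nonneg f ->
  (forall t, 0 <= t -> subgrad f t (g t)) ->
  (forall s t, 0 <= s -> 0 <= t -> g s = g t -> s = t) ->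
  f K = f t + g t * (K - t) -> K = t.
Proof.
move=> ht hK Hc Hg Hinj E.
case: (Req_dec K t) => // Hne. exfalso.
set s := (K + t) / 2.
have hs : 0 <= s by rewrite /s; lra.
have c1 := Hc K t (/2) hK ht ltac:(lra).
have e1 : / 2 * K + (1 - / 2) * t = s by rewrite /s; field.
rewrite e1 in c1.
have c2 := Hg t ht s hs.
have c3 := Hg s hs K hK.
have c4 := Hg s hs t ht.
have ee : (g t - g s) * (K - t) = 0.
  have fs : f s = f t + g t * (s - t).
    rewrite E in c1. rewrite /s in c1 c2 *. lra.
  rewrite fs E in c3. rewrite fs in c4. rewrite /s in c3 c4 *.
  lra.
have : g t - g s = 0.
  case: (Rmult_integral _ _ ee) => // h; lra.
move=> h. have := Hinj t s ht hs ltac:(lra). rewrite /s. lra.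
Qed.

Section Main.
Variables (A B S : finType) (P : A -> B -> S -> R) (f g : R -> R).
Hypothesis HP : is_pmf3 P.
Hypothesis HPA : forall a, 0 < PA P a.
Hypothesis HPB : forall b, 0 < PB P b.
Hypothesis Hg : forall t, 0 <= t -> subgrad f t (g t).

Definition tt (hA : A -> S -> R) (hB : B -> S -> R) (p : S -> R) a b :=
  rsum (fun y => hA a y * hB b y / p y).

Lemma tt_ge0 hA hB p a b : admissible hA hB p -> 0 <= tt hA hB p a b.
Proof.
move=> [HA [HB [_ Hp]]]. apply: rsum_ge0 => y.
have := (HA a).1 y; have := (HB b).1 y; have := Hp y => *.
apply: Rmult_le_pos; [exact: Rmult_le_pos | apply: Rlt_le; exact: Rinv_0_lt_compat].
Qed.

Lemma K_ge0 a b : 0 <= Kratio P a b.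
Proof.
rewrite /Kratio. apply: Rmult_le_pos.
  apply: rsum_ge0 => y; exact: HP.1.
apply: Rlt_le; apply: Rinv_0_lt_compat; apply: Rmult_lt_0_compat; auto.
Qed.

Lemma PAB_K a b : PAB P a b = PA P a * PB P b * Kratio P a b.
Proof. rewrite /Kratio. have := HPA a; have := HPB b => *. field. lra. Qed.

Definition termG (hA : A -> S -> R) (hB : B -> S -> R) (p : S -> R) a b :=
  PAB P a b * Rf g (hA a) (hB b) p - PA P a * PB P b * fstar f (Rf g (hA a) (hB b) p).
Definition termM a b := PA P a * PB P b * f (Kratio P a b).

Lemma term_le hA hB p a b : admissible hA hB p -> termG hA hB p a b <= termM a b.
Proof.
move=> Ha. rewrite /termG /termM /Rf PAB_K.
have ht := tt_ge0 hA hB p a b Ha. rewrite /tt in ht.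
have := @key_ineq f g _ _ ht (K_ge0 a b) (Hg _ ht).
have hp : 0 < PA P a * PB P b by apply: Rmult_lt_0_compat.
move=> h. have := Rmult_le_compat_l _ _ _ (Rlt_le _ _ hp) h. lra.
Qed.

Lemma term_eq hA hB p a b : tt hA hB p a b = Kratio P a b -> termG hA hB p a b = termM a b.
Proof.
move=> E. rewrite /termG /termM /Rf PAB_K. rewrite /tt in E. rewrite E.
rewrite fstar_val //; [ring | exact: K_ge0 | apply: Hg; exact: K_ge0].
Qed.

Lemma MIG_le hA hB p : admissible hA hB p -> MIG f g P hA hB p <= MIf f P.
Proof.
move=> Ha. rewrite /MIG /MIf. apply: rsum_le => a; apply: rsum_le => b.
exact: (term_le hA hB p a b Ha).
Qed.

Lemma tQ (Q : A -> B -> S -> R) a b :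
  (forall a b, PAB Q a b = PAB P a b) -> (forall y, 0 < PY Q y) -> cond_indep Q ->
  tt (fun a y => PAY Q a y / PA P a) (fun b y => PBY Q b y / PB P b) (fun y => PY Q y) a b
  = Kratio P a b.
Proof.
move=> HQ HY Hci. rewrite /tt /Kratio -HQ /PAB -rsum_div. apply: rsum_ext => y.
have := Hci a b y; have := HY y; have := HPA a; have := HPB b => h1 h2 h3 h4.
transitivity (PAY Q a y * PBY Q b y / PY Q y / (PA P a * PB P b)).
  field; lra.
rewrite -h4. field. lra.
Qed.

Lemma admQ (Q : A -> B -> S -> R) :
  (forall a b y, 0 <= Q a b y) ->
  (forall a b, PAB Q a b = PAB P a b) -> (forall y, 0 < PY Q y) ->
  admissible (fun a y => PAY Q a y / PA P a) (fun b y => PBY Q b y / PB P b) (fun y => PY Q y).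
Proof.
move=> H0 HQ HY. split; [|split; [|split]].
- move=> a; split.
  + move=> y. apply: Rmult_le_pos; first by apply: rsum_ge0.
    apply: Rlt_le; apply: Rinv_0_lt_compat; auto.
  + rewrite rsum_div /PAY rsum_exch.
    have -> : rsum (fun b => rsum (fun y => Q a b y)) = PA P a.
      rewrite /PA. apply: rsum_ext => b. exact: HQ.
    have := HPA a => *. field. lra.
- move=> b; split.
  + move=> y. apply: Rmult_le_pos; first by apply: rsum_ge0.
    apply: Rlt_le; apply: Rinv_0_lt_compat; auto.
  + rewrite rsum_div /PBY rsum_exch.
    have -> : rsum (fun a => rsum (fun y => Q a b y)) = PB P b.
      rewrite /PB. apply: rsum_ext => a. exact: HQ.
    have := HPB b => *. field. lra.
- split; first by move=> y; apply: Rlt_le.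
  transitivity (rsum (fun y => rsum (fun a => rsum (fun b => Q a b y)))); first by [].
  rewrite rsum_exch.
  have -> : rsum (fun a => rsum (fun y => rsum (fun b => Q a b y))) =
            rsum (fun a => rsum (fun b => rsum (fun y => Q a b y))).
    apply: rsum_ext => a. exact: rsum_exch.
  rewrite -HP.2. apply: rsum_ext => a; apply: rsum_ext => b. exact: HQ.
- exact: HY.
Qed.

End Main.
Arguments term_eq {A B S P f g}.
Arguments term_le {A B S P f g}.
Arguments MIG_le {A B S P f g}.
Arguments tQ {A B S P}.
Arguments admQ {A B S P}.
Arguments K_ge0 {A B S P}.
Arguments PAB_K {A B S P}.
Arguments tt_ge0 {A B S}.
Arguments termM {A B S}.
Arguments termG {A B S}.
Arguments tt {A B S}.

Theorem mainTheorem4 (A B S : finType) (P : A -> B -> S -> R) (f g : R -> R)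
  (HP : is_pmf3 P)
  (HPA : forall a, 0 < PA P a) (HPB : forall b, 0 < PB P b)
  (HPY : forall y, 0 < PY P y)
  (Hci : cond_indep P)
  (Hconv : convex_nonneg f) (Hf1 : f 1 = 0)
  (Hg : forall t, 0 <= t -> subgrad f t (g t)) :
  (* (1) solution -> maximizer *)
  (forall Q : A -> B -> S -> R,
     (forall a b y, 0 <= Q a b y) ->
     (forall a b, PAB Q a b = PAB P a b) ->
     (forall y, 0 < PY Q y) ->
     cond_indep Q ->
     is_maximizer f g P (fun a y => PAY Q a y / PA P a)
                        (fun b y => PBY Q b y / PB P b)
                        (fun y => PY Q y) /\
     MIG f g P (fun a y => PAY Q a y / PA P a)
               (fun b y => PBY Q b y / PB P b)
               (fun y => PY Q y) = MIf f P) /\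
  (* (2) maximizer -> permuted ground truth *)
  (well_defined_prior P -> deriv_nonneg f g ->
   (forall s t, 0 <= s -> 0 <= t -> g s = g t -> s = t) ->
   forall hA hB p, is_maximizer f g P hA hB p ->
   exists pi : {perm S},
     (forall a y, hA a y = PAY P a ((pi^-1)%g y) / PA P a) /\
     (forall b y, hB b y = PBY P b ((pi^-1)%g y) / PB P b) /\
     (forall y, p y = PY P ((pi^-1)%g y))).
Proof.
have part1 : forall Q : A -> B -> S -> R,
     (forall a b y, 0 <= Q a b y) ->
     (forall a b, PAB Q a b = PAB P a b) ->
     (forall y, 0 < PY Q y) ->
     cond_indep Q ->
     is_maximizer f g P (fun a y => PAY Q a y / PA P a)
                        (fun b y => PBY Q b y / PB P b)
                        (fun y => PY Q y) /\
     MIG f g P (fun a y => PAY Q a y / PA P a)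
               (fun b y => PBY Q b y / PB P b)
               (fun y => PY Q y) = MIf f P.
  move=> Q H0 HQ HY HcQ.
  have E : MIG f g P (fun a y => PAY Q a y / PA P a)
               (fun b y => PBY Q b y / PB P b)
               (fun y => PY Q y) = MIf f P.
    rewrite /MIG /MIf. apply: rsum_ext => a; apply: rsum_ext => b.
    exact: (term_eq HP HPA HPB Hg _ _ _ a b (tQ HPA HPB Q a b HQ HY HcQ)).
  split => //. split; first exact: (admQ HP HPA HPB).
  move=> hA' hB' p' Ha. rewrite E. exact: (MIG_le HP HPA HPB Hg).
split; first exact: part1.
move=> Hwd _ Hinj hA hB p [Ha Hmax].
have [Hmt EP] := part1 P HP.1 (fun a b => erefl (PAB P a b)) HPY Hci.
have Hge := Hmax _ _ _ Hmt.1. rewrite EP in Hge.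
have Hle := MIG_le HP HPA HPB Hg _ _ _ Ha.
have Z : rsum (fun a => rsum (fun b => termM P f a b - termG P f g hA hB p a b)) = 0.
  transitivity (MIf f P - MIG f g P hA hB p); last lra.
  rewrite /MIf /MIG -rsum_minus. apply: rsum_ext => a. by rewrite -rsum_minus.
have Zab : forall a b, termM P f a b - termG P f g hA hB p a b = 0.
  move=> a b.
  have Hn : forall a b, 0 <= termM P f a b - termG P f g hA hB p a b.
    move=> a' b'. have := term_le HP HPA HPB Hg _ _ _ a' b' Ha. lra.
  apply: (@rsum_eq0 _ (fun b => termM P f a b - termG P f g hA hB p a b)); first by move=> ?; apply: Hn.
  apply: (@rsum_eq0 _ (fun a => rsum (fun b => termM P f a b - termG P f g hA hB p a b)) _ Z a) => a'.
  apply: rsum_ge0 => b'. exact: Hn.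
have Htt : forall a b, tt hA hB p a b = Kratio P a b.
  move=> a b. symmetry.
  have ht := tt_ge0 hA hB p a b Ha.
  apply: (@key_eq f g _ _ ht (K_ge0 HP HPA HPB a b) Hconv Hg Hinj).
  have := Zab a b. rewrite /termM /termG /Rf PAB_K //. rewrite /tt in ht *.
  rewrite fstar_val //; last exact: Hg.
  set K := Kratio P a b. set t := rsum _.
  have hp : 0 < PA P a * PB P b by apply: Rmult_lt_0_compat.
  move=> h.
  have h2 : PA P a * PB P b * (f K - (f t + g t * (K - t))) = 0 by rewrite -h; ring.
  case: (Rmult_integral _ _ h2) => h3; lra.
have S1 : solves P hA hB p.
  case: Ha => [HA [HB [Hp Hp0]]]. split; first done. split; first done.
  split; first done. split; first done. move=> a b; exact: Htt.
have S2 : solves P (fun a y => PAY P a y / PA P a) (fun b y => PBY P b y / PB P b) (fun y => PY P y).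
  case: Hmt.1 => [HA [HB [Hp Hp0]]]. split; first done. split; first done.
  split; first done. split; first done. move=> a b. exact: (tQ HPA HPB).
have [pi [Ep [EA EB]]] := Hwd _ _ _ _ _ _ S1 S2.
exists pi. split; [|split].
- move=> a y. by rewrite EA.
- move=> b y. by rewrite EB.
- move=> y. by rewrite Ep.
Qed.
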